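(* Let $\theta\in\mathrm{Irr}(N)$, let $N\le L\le\mathrm{Stab}_G(\tilde\theta)$ and $N\le K\le\mathrm{Stab}_G(\theta)$ with $L$ normalising $K$, and let $\hat\theta$ be a strong extension of $\theta$ to $K$. Let $g\in L$ and suppose $\psi_g,\psi'_g\in\mathrm{Lin}(G)$ both satisfy ${}^g\theta=\theta\psi_g|_N=\theta\psi'_g|_N$, and that $\mu,\mu'\in F_K$ satisfy ${}^g\hat\theta=\hat\theta\,\psi_g|_K\,\mu=\hat\theta\,\psi'_g|_K\,\mu'$. Then $\mu\Gamma_{K,\tilde\theta}=\mu'\Gamma_{K,\tilde\theta}$; that is, the coset $\mu(gN)\Gamma_{K,\tilde\theta}$ is independent of the choice of $\psi_g|_K$.
   Context: $G$ is a profinite group, $N$ an open normal subgroup; $\mathrm{Irr}$, $\mathrm{Lin}$ denote continuous irreducible, resp. degree-one, complex characters; $\tilde\theta=\{\theta\psi|_N:\psi\in\mathrm{Lin}(G)\}$ is the $G$-twist class of $\theta$, with $G$ acting by conjugation ${}^g\theta(n)=\theta(g^{-1}ng)$. A projective representation of $K$ is $\Pi:K\to\mathrm{GL}_m(\mathbb{C})$ with $\Pi(x)\Pi(y)=\alpha(x,y)\Pi(xy)$ ($\alpha$ the factor set); its projective character is $\mathrm{Tr}\circ\Pi$. A strong extension of $\theta$ to $K$ (with $K$ fixing $\theta$) is the projective character of a projective representation $\Pi$ of $K$ with $\Pi(xn)=\Pi(x)\Theta(n)$, $\Pi(nx)=\Theta(n)\Pi(x)$ ($x\in K,n\in N$)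 for a representation $\Theta$ affording $\theta$. $F_K$ is the group of functions $K/N\to\mathbb{C}^\times$ (viewed as functions on $K$ constant on $N$-cosets) under pointwise multiplication; ${}^gf(x)=f(g^{-1}xg)$. $\mathrm{Lin}(K/N)$ is the set of degree-one characters of $K$ trivial on $N$, and $\Gamma_{K,\tilde\theta}=\{\nu\in\mathrm{Lin}(K/N):\hat\theta\,\varepsilon|_K=\hat\theta\,\nu\text{ for some }\varepsilon\in\mathrm{Lin}(G)\}$ (independent of the choice of $\theta\in\tilde\theta$ and of $\hat\theta$). *)

(* Defs.v *)
From HB Require Import structures.
From mathcomp Require Import all_boot all_order all_algebra.
From mathcomp Require Import all_classical all_reals all_analysis.
From mathcomp Require Import complex Rstruct Rstruct_topology.
Set Implicit Arguments. Unset Strict Implicit. Unset Printing Implicit Defensive.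
Import Order.TTheory GRing.Theory Num.Theory.
Local Open Scope classical_set_scope.
Local Open Scope ring_scope.

HB.structure Definition TopGroup := {G of Group G & Topological G}.

Definition CC : numClosedFieldType := complex Rdefinitions.R.

Definition profinite (G : TopGroup.type) : Prop :=
  continuous (fun p : G * G => (p.1 * p.2)%g) /\
  continuous (fun x : G => (x^-1)%g) /\
  compact [set: G] /\ hausdorff_space G /\ totally_disconnected [set: G].

Section Defs.
Variable G : TopGroup.type.

Definition conjg' (x g : G) : G := (g^-1 * x * g)%g.

Definition is_subgroup (H : set G) : Prop :=
  H 1%g /\ (forall x y, H x -> H y -> H (x * y)%g) /\ (forall x, H x -> H (x^-1)%g).

Definition open_normal (N : set G) : Prop :=
  is_subgroup N /\ open N /\ (forall g n, N n -> N (conjg' n g)).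

Definition cont_on (A : set G) (f : G -> CC) : Prop :=
  forall x, A x -> forall e : CC, 0 < e ->
    exists U : set G, open U /\ U x /\ (forall y, U y -> A y -> `|f y - f x| < e).

(* a (matrix) representation of the subgroup H of degree m (values outside H
   are irrelevant) *)
Definition rep_of (H : set G) (m : nat) (Th : G -> 'M[CC]_m) : Prop :=
  Th 1%g = 1%:M /\ (forall x y, H x -> H y -> Th (x * y)%g = Th x *m Th y).

Definition cont_rep (H : set G) (m : nat) (Th : G -> 'M[CC]_m) : Prop :=
  forall i j, cont_on H (fun x => Th x i j).

Definition irr_rep (H : set G) (m : nat) (Th : G -> 'M[CC]_m) : Prop :=
  (0 < m)%N /\
  forall k (U : 'M[CC]_(k, m)), (forall x, H x -> (U *m Th x <= U)%MS) ->
    \rank U = 0%N \/ \rank U = m.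

Definition affords (H : set G) (m : nat) (Th : G -> 'M[CC]_m) (chi : G -> CC) :=
  forall x, H x -> chi x = \tr (Th x).

Definition is_Irr (H : set G) (theta : G -> CC) : Prop :=
  exists m (Th : G -> 'M[CC]_m),
    [/\ rep_of H Th, cont_rep H Th, irr_rep H Th & affords H Th theta].

Definition is_Lin (H : set G) (psi : G -> CC) : Prop :=
  exists Th : G -> 'M[CC]_1,
    [/\ rep_of H Th, cont_rep H Th & affords H Th psi].

Definition is_Lin_quot (N K : set G) (nu : G -> CC) : Prop :=
  is_Lin K nu /\ (forall n, N n -> nu n = 1).

Definition stab (N : set G) (theta : G -> CC) (g : G) : Prop :=
  forall n, N n -> theta (conjg' n g) = theta n.

(* Stab_G(theta~), theta~ = {theta psi|_N : psi \in Lin(G)}, with G acting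
   by conjugation; g stabilises the set theta~ (functions compared on N) *)
Definition stab_twist (N : set G) (theta : G -> CC) (g : G) : Prop :=
  (forall psi, is_Lin setT psi -> exists psi', is_Lin setT psi' /\
     forall n, N n -> theta (conjg' n g) * psi (conjg' n g) = theta n * psi' n) /\
  (forall psi', is_Lin setT psi' -> exists psi, is_Lin setT psi /\
     forall n, N n -> theta (conjg' n g) * psi (conjg' n g) = theta n * psi' n).

Definition strong_ext (N K : set G) (theta thetah : G -> CC) : Prop :=
  exists m (Th : G -> 'M[CC]_m) (Pi : G -> 'M[CC]_m) (alpha : G -> G -> CC),
  [/\ rep_of N Th /\ affords N Th theta,
      (forall x, K x -> Pi x \in unitmx),
      (forall x y, K x -> K y -> Pi x *m Pi y = alpha x y *: Pi (x * y)%g),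
      (forall x n, K x -> N n ->
          Pi (x * n)%g = Pi x *m Th n /\ Pi (n * x)%g = Th n *m Pi x)
    & affords K Pi thetah].

(* F_K: functions K/N -> C^x, viewed as functions on K constant on N-cosets *)
Definition in_FK (N K : set G) (mu : G -> CC) : Prop :=
  (forall x, K x -> mu x != 0) /\ (forall x n, K x -> N n -> mu (x * n)%g = mu x).

(* Gamma_{K, theta~} (defined through the given thetah) *)
Definition Gamma (N K : set G) (thetah nu : G -> CC) : Prop :=
  is_Lin_quot N K nu /\
  exists eps, is_Lin setT eps /\ forall x, K x -> thetah x * eps x = thetah x * nu x.

End Defs.

(* Main.v *)
Require Import Defs.
From HB Require Import structures.
From mathcomp Require Import all_boot all_order all_algebra.
From mathcomp Require Import all_classical all_reals all_analysis.
From mathcomp Require Import complex Rstruct Rstruct_topology.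
Import Order.TTheory GRing.Theory Num.Theory.
Local Open Scope classical_set_scope.
Local Open Scope ring_scope.
From Stdlib Require Import Classical IndefiniteDescription.
From mathcomp Require Import zify ring.
Import numFieldTopology.Exports numFieldNormedType.Exports.

Module Aux.
Set Implicit Arguments. Unset Strict Implicit. Unset Printing Implicit Defensive.

Section Subspace.
Variables (F : fieldType) (k : nat) (Q : 'rV[F]_k -> Prop).
Hypotheses (Q0 : Q 0) (QD : forall u v, Q u -> Q v -> Q (u + v))
  (QZ : forall a u, Q u -> Q (a *: u)).

Lemma subspace_mx_aux d : forall n (U : 'M[F]_(n, k)), (forall i, Q (row i U)) ->
  (k - \rank U <= d)%N ->
  exists n' (U' : 'M[F]_(n', k)), (forall i, Q (row i U')) /\ (forall v, Q v -> (v <= U')%MS).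
Proof.
elim: d => [|d IH] n U QU hd.
  exists n, U; split => // v _; apply: submx_full.
  by rewrite /row_full eqn_leq rank_leq_col /=; move: hd; rewrite leqn0 subn_eq0.
have [H|] := classic (forall v, Q v -> (v <= U)%MS); first by exists n, U; split.
move=> /not_all_ex_not [v Hv]; have [Qv nvU] := imply_to_and _ _ Hv.
have lt : (\rank U < \rank (col_mx U v))%N.
  have sU : (U <= col_mx U v)%MS by rewrite -addsmxE addsmxSl.
  have := mxrank_leqif_sup sU; rewrite ltn_neqAle => [[-> ->]].
  by rewrite andbT col_mx_sub submx_refl /=; apply/negP.
apply: (IH _ (col_mx U v)).
  move=> i; rewrite -(splitK i); case: (fintype.split i) => j /=.
    by rewrite rowKu.
  rewrite rowKd (_ : row j v = v) //; apply/rowP => l; by rewrite mxE ord1.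
have : (\rank (col_mx U v) <= k)%N by apply: rank_leq_col.
move: hd; move: (\rank U) (\rank (col_mx U v)) lt => a b; lia.
Qed.

Lemma Qsum n (U : 'M[F]_(n, k)) : (forall i, Q (row i U)) -> forall v, (v <= U)%MS -> Q v.
Proof.
move=> QU v /submxP [x ->]; rewrite mulmx_sum_row.
by apply: (big_ind Q) => // i _; apply: QZ.
Qed.

Lemma subspace_mx : exists n (U : 'M[F]_(n, k)), forall v, Q v <-> (v <= U)%MS.
Proof.
have [n [U [QU H]]] := @subspace_mx_aux k 0 (0 : 'M[F]_(0, k)) (fun i => match i with Ordinal _ h => False_ind _ (notF h) end) (leq_subr _ _).
by exists n, U => v; split; [apply: H | apply: Qsum].
Qed.
End Subspace.

Section Span.
Variables (F : fieldType) (I : eqType) (P : I -> Prop) (m : nat) (Th : I -> 'M[F]_m).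

Definition ev (s : seq (F * I)) := \sum_(p <- s) p.1 *: Th p.2.
Definition okS (s : seq (F * I)) := forall p, p \in s -> P p.2.
Definition Sp M := exists s, okS s /\ M = ev s.

Lemma Sp0 : Sp 0.
Proof. by exists [::]; split => //; rewrite /ev big_nil. Qed.

Lemma SpD A B : Sp A -> Sp B -> Sp (A + B).
Proof.
move=> [s [os ->]] [t [ot ->]]; exists (s ++ t); split; last by rewrite /ev big_cat.
by move=> p; rewrite mem_cat => /orP [/os|/ot].
Qed.

Lemma SpZ a A : Sp A -> Sp (a *: A).
Proof.
move=> [s [os ->]]; exists [seq (a * p.1, p.2) | p <- s]; split.
  by move=> p /mapP [q /os qs ->].
by rewrite /ev big_map scaler_sumr; apply: eq_bigr => p _; rewrite scalerA.
Qed.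

Lemma SpB A B : Sp A -> Sp B -> Sp (A - B).
Proof. by move=> SA SB; apply: SpD => //; rewrite -scaleN1r; apply: SpZ. Qed.

Lemma SpTh i : P i -> Sp (Th i).
Proof.
move=> Pi; exists [:: (1, i)]; split; first by move=> p; rewrite inE => /eqP ->.
by rewrite /ev big_seq1 scale1r.
Qed.

Lemma Sp_sum (J : finType) (f : J -> 'M[F]_m) : (forall j, Sp (f j)) -> Sp (\sum_j f j).
Proof. by move=> H; apply: (big_ind Sp) => //; [apply: Sp0 | apply: SpD]. Qed.

Hypothesis Pmul : forall i j, P i -> P j -> exists k, P k /\ Th k = Th i *m Th j.

Lemma SpM A B : Sp A -> Sp B -> Sp (A *m B).
Proof.
move=> [s [os ->]] SB; rewrite /ev mulmx_suml.
elim: s os => [|p s IH] os; first by rewrite big_nil; apply: Sp0.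
rewrite big_cons; apply: SpD; last by apply: IH => q qs; apply: os; rewrite inE qs orbT.
rewrite -scalemxAl; apply: SpZ.
have Pp : P p.2 by apply: os; rewrite inE eqxx.
case: SB => [t [ot ->]]; rewrite /ev mulmx_sumr.
elim: t ot => [|q t IH'] ot; first by rewrite big_nil; apply: Sp0.
rewrite big_cons; apply: SpD; last by apply: IH' => r rt; apply: ot; rewrite inE rt orbT.
rewrite -scalemxAr; apply: SpZ.
have [k [Pk <-]] := Pmul Pp (ot q (mem_head _ _)).
by apply: SpTh.
Qed.

End Span.

Section Burnside.
Variables (F : closedFieldType) (I : eqType) (P : I -> Prop) (m : nat) (Th : I -> 'M[F]_m).
Hypothesis Pmul : forall i j, P i -> P j -> exists k, P k /\ Th k = Th i *m Th j.
Hypothesis P1 : exists i, P i /\ Th i = 1%:M.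
Hypothesis irr : forall k (U : 'M[F]_(k, m)), (forall i, P i -> (U *m Th i <= U)%MS) ->
  \rank U = 0%N \/ \rank U = m.
Local Notation Sp := (Sp P Th).

Lemma Sp1 : Sp 1%:M.
Proof. by have [i [Pi <-]] := P1; apply: SpTh. Qed.

Lemma row_orbit (v : 'rV[F]_m) : v != 0 -> forall y, exists A, Sp A /\ y = v *m A.
Proof.
move=> nv0.
pose Q y := exists A, Sp A /\ y = v *m A.
have [n [U HU]] : exists n (U : 'M[F]_(n, m)), forall y, Q y <-> (y <= U)%MS.
  apply: subspace_mx.
  - by exists 0; split; [apply: Sp0 | rewrite mulmx0].
  - move=> u w [A [SA ->]] [B [SB ->]]; exists (A + B); split; first exact: SpD.
    by rewrite mulmxDr.
  - move=> a u [A [SA ->]]; exists (a *: A); split; first exact: SpZ.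
    by rewrite scalemxAr.
have invU : forall i, P i -> (U *m Th i <= U)%MS.
  move=> i Pi; apply/row_subP => j; rewrite row_mul.
  have [A [SA ->]] := (proj2 (HU (row j U))) (row_sub j U).
  apply/HU; exists (A *m Th i); split; last by rewrite mulmxA.
  by apply: SpM => //; apply: SpTh.
have vU : (v <= U)%MS by apply/HU; exists 1%:M; split; [exact: Sp1 | rewrite mulmx1].
case: (irr invU) => [/eqP|] rU.
  by rewrite mxrank_eq0 in rU; move: vU; rewrite (eqP rU) => /submx0null v0; move: nv0; rewrite v0 eqxx.
move=> y; apply/HU; apply: submx_full; by rewrite /row_full rU.
Qed.

Lemma col_orbit (u : 'cV[F]_m) : u != 0 -> forall z, exists A, Sp A /\ z = A *m u.
Proof.
move=> nu0.
pose Q (y : 'rV[F]_m) := exists A, Sp A /\ y = (A *m u)^T.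
have [n [U HU]] : exists n (U : 'M[F]_(n, m)), forall y, Q y <-> (y <= U)%MS.
  apply: subspace_mx.
  - by exists 0; split; [apply: Sp0 | rewrite mul0mx trmx0].
  - move=> a w [A [SA ->]] [B [SB ->]]; exists (A + B); split; first exact: SpD.
    by rewrite mulmxDl linearD.
  - move=> a w [A [SA ->]]; exists (a *: A); split; first exact: SpZ.
    by rewrite -scalemxAl linearZ.
case: (boolP (row_full U)) => fU.
  move=> z; have /HU [A [SA eA]] : (z^T <= U)%MS by apply: submx_full.
  by exists A; split => //; rewrite -[z]trmxK eA trmxK.
exfalso.
have kpos : (0 < \rank (kermx U^T))%N.
  rewrite mxrank_ker mxrank_tr; move: fU; rewrite /row_full.
  have := rank_leq_col U; lia.
have [j nwj] : exists j, row j (kermx U^T) != 0.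
  apply/existsP; move: kpos; rewrite lt0n mxrank_eq0; apply: contraR.
  rewrite negb_exists => /forallP H; apply/eqP/row_matrixP => j.
  by rewrite row0; apply/eqP; rewrite -[_ == _]negbK H.
set w := row j (kermx U^T) in nwj.
have wU : w *m U^T = 0 by rewrite /w -row_mul mulmx_ker row0.
have wA : forall A, Sp A -> w *m A *m u = 0.
  move=> A SA; have /HU/submxP [x ex] : Q (A *m u)^T by exists A.
  by rewrite -mulmxA -[A *m u]trmxK ex trmx_mul mulmxA wU mul0mx.
have yu : forall y : 'rV[F]_m, y *m u = 0.
  by move=> y; have [B [SB ->]] := row_orbit nwj y; apply: wA.
move: nu0; rewrite -[u]mul1mx; apply/negP; rewrite negbK; apply/eqP/row_matrixP => i.
by rewrite row_mul yu row0.
Qed.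
End Burnside.

Lemma nz_row (F : fieldType) k n (A : 'M[F]_(k, n)) : A != 0 -> exists j, row j A != 0.
Proof.
move=> nA; apply/existsP; move: nA; apply: contraR.
rewrite negb_exists => /forallP H; apply/eqP/row_matrixP => j.
by rewrite row0; apply/eqP; rewrite -[_ == _]negbK H.
Qed.

Lemma eig_exists (F : closedFieldType) n (M : 'M[F]_n) : (0 < n)%N ->
  exists c (z : 'rV_n), z != 0 /\ z *m M = c *: z.
Proof.
move=> n0; have : size (char_poly M) != 1%N by rewrite size_char_poly; lia.
move=> /closed_rootP [c]; rewrite -eigenvalue_root_char => /eigenvalueP [z ez nz].
by exists c, z.
Qed.

Section Burnside2.
Variables (F : closedFieldType) (I : eqType) (P : I -> Prop) (m : nat) (Th : I -> 'M[F]_m).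
Hypothesis Pmul : forall i j, P i -> P j -> exists k, P k /\ Th k = Th i *m Th j.
Hypothesis P1 : exists i, P i /\ Th i = 1%:M.
Hypothesis irr : forall k (U : 'M[F]_(k, m)), (forall i, P i -> (U *m Th i <= U)%MS) ->
  \rank U = 0%N \/ \rank U = m.
Hypothesis mpos : (0 < m)%N.
Local Notation Sp := (Sp P Th).

Lemma rank_drop T : Sp T -> (1 < \rank T)%N -> exists T', Sp T' /\ (0 < \rank T' < \rank T)%N.
Proof.
move=> ST r2.
have [Hall|] := classic (forall A, Sp A -> exists c, T *m A *m T = c *: T).
  exfalso.
  have nT : T != 0 by rewrite -mxrank_eq0; lia.
  have [j nw] := nz_row nT; set w := row j T in nw.
  have yT : forall y : 'rV_m, (y *m T <= w)%MS.
    move=> y; have [A [SA ->]] := row_orbit Pmul P1 irr nw y.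
    have [c ec] := Hall A SA.
    by rewrite /w rowE -!mulmxA (mulmxA T) ec -scalemxAr scalemx_sub.
  have : (T <= w)%MS by apply/row_subP => i; rewrite rowE; apply: yT.
  move=> /mxrankS; have := rank_leq_row w; lia.
move=> /not_all_ex_not [A HA].
have [SA HA'] := imply_to_and _ _ HA.
have Hc : forall c, T *m A *m T != c *: T.
  by move=> c; apply/eqP => e; apply: HA'; exists c.
set B := row_base T.
pose Phi := B *m A *m T *m pinvmx B.
have [c [z [nz ez]]] := eig_exists Phi (ltn_trans (ltnSn 0) r2).
set w := z *m B.
have nw : w != 0 by rewrite /w mulmx_free_eq0 // row_base_free.
have wAT : w *m (A *m T) = c *: w.
  have sB : (B *m A *m T <= B)%MS.
    by apply: submx_trans (submxMl _ _) _; rewrite eq_row_base.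
  have e1 : z *m Phi *m B = z *m (B *m A *m T) by rewrite /Phi -mulmxA mulmxKpV.
  by rewrite /w scalemxAl -ez e1 !mulmxA.
exists (T *m (A *m T - c%:M)); split.
  rewrite mulmxBr mul_mx_scalar mulmxA; apply: SpB; last by apply: SpZ.
  by apply: SpM => //; apply: SpM.
apply/andP; split.
  rewrite lt0n mxrank_eq0 mulmxBr mul_mx_scalar mulmxA subr_eq0; exact: Hc.
have wcap : (w <= T :&: kermx (A *m T - c%:M))%MS.
  rewrite sub_capmx; apply/andP; split.
    by rewrite /w; apply: submx_trans (submxMl _ _) _; rewrite eq_row_base.
  by apply/sub_kermxP; rewrite mulmxBr wAT mul_mx_scalar subrr.
have := mxrank_mul_ker T (A *m T - c%:M).
have : (0 < \rank w)%N by rewrite lt0n mxrank_eq0.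
have := mxrankS wcap; lia.
Qed.

Lemma rank1_exists : exists T, Sp T /\ \rank T = 1%N.
Proof.
suff H : forall d T, Sp T -> (0 < \rank T <= d)%N -> exists T, Sp T /\ \rank T = 1%N.
  apply: (H m 1%:M); first exact: (Sp1 P1).
  by rewrite mxrank1 mpos leqnn.
elim=> [|d IH] T ST hT; first by lia.
have [r1|r2] := eqVneq (\rank T) 1%N; first by exists T.
have [T' [ST' hT']] := rank_drop ST (ltac:(lia)).
by apply: (IH T' ST'); lia.
Qed.

Theorem burnside M : Sp M.
Proof.
have [T [ST rT]] := rank1_exists.
have nT : T != 0 by rewrite -mxrank_eq0 rT.
have [j nv] := nz_row nT; set v := row j T in nv.
have vT : (v <= T)%MS by apply: row_sub.
have Tv : (T <= v)%MS.
  have := mxrank_leqif_sup vT => [[_ <-]].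
  by rewrite eqn_leq (mxrankS vT) rT lt0n mxrank_eq0.
have [u eu] := submxP Tv.
have nu : u != 0 by move: nT; apply: contraNneq => u0; rewrite eu u0 mul0mx.
rewrite (matrix_sum_delta M); apply: Sp_sum => i; apply: Sp_sum => k; apply: SpZ.
have [Bm [SBm eB]] := row_orbit Pmul P1 irr nv (delta_mx 0 k).
have [Am [SAm eA]] := col_orbit Pmul P1 irr nu (delta_mx i 0).
have -> : delta_mx i k = Am *m T *m Bm :> 'M[F]_m.
  by rewrite eu !mulmxA -eA -mulmxA -eB mul_delta_mx.
by apply: SpM => //; apply: SpM.
Qed.
End Burnside2.

Lemma tr1 (R : comPzRingType) (A : 'M[R]_1) : \tr A = A 0 0.
Proof. by rewrite /mxtrace big_ord1. Qed.

Lemma tr_delta (R : comPzRingType) m (X : 'M[R]_m) i j : \tr (X *m delta_mx j i) = X i j.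
Proof.
rewrite -[delta_mx j i](mul_delta_mx (0 : 'I_1)) mulmxA mxtrace_mulC -colE -rowE tr1.
by rewrite !mxE.
Qed.

Lemma tr_sum (R : comPzRingType) m (J : Type) (s : seq J) (Q : pred J) (F' : J -> 'M[R]_m) :
  \tr (\sum_(i <- s | Q i) F' i) = \sum_(i <- s | Q i) \tr (F' i).
Proof. by apply: (big_morph _ (@mxtraceD _ _)); rewrite mxtrace0. Qed.

Lemma unit_nz (R : fieldType) m (A : 'M[R]_m) : (0 < m)%N -> A \in unitmx -> A != 0.
Proof.
move=> mp uA; apply/eqP => A0; have := mxrank_unit uA; rewrite A0 mxrank0 => e.
by move: mp; rewrite -e.
Qed.

Section ProdS.
Variables (F : fieldType) (G : groupType) (N : G -> Prop) (m : nat) (Th : G -> 'M[F]_m).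
Hypotheses (NM : forall x y, N x -> N y -> N (x * y)%g).
Hypotheses (ThM : forall x y, N x -> N y -> Th (x * y)%g = Th x *m Th y).
Definition prodS (s t : seq (F * G)) := [seq (p.1 * q.1, (p.2 * q.2)%g) | p <- s, q <- t].

Lemma ok_prod s t : okS N s -> okS N t -> okS N (prodS s t).
Proof. by move=> os ot p /allpairsP [[q r] [/= qs rt ->]] /=; apply: NM; [apply: os | apply: ot]. Qed.

Lemma ev_prod s t : okS N s -> okS N t -> ev Th (prodS s t) = ev Th s *m ev Th t.
Proof.
move=> os ot; rewrite /ev /prodS big_allpairs_dep mulmx_suml; apply: eq_big_seq => p /os Pp.
rewrite mulmx_sumr; apply: eq_big_seq => q /ot Pq /=.
by rewrite ThM // -scalemxAl -scalemxAr scalerA.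
Qed.

End ProdS.

Section Main.
Variables (F : numClosedFieldType) (G : groupType) (N K : G -> Prop) (m : nat).
Variables (Th Pi : G -> 'M[F]_m) (alpha : G -> G -> F) (lam f thetah : G -> F).
Hypotheses (mpos : (0 < m)%N) (NM : forall x y, N x -> N y -> N (x * y)%g).
Hypotheses (ThM : forall x y, N x -> N y -> Th (x * y)%g = Th x *m Th y).
Hypothesis SpAll : forall M, Sp N Th M.
Hypotheses (lamM : forall x y, lam (x * y)%g = lam x * lam y) (lam0 : forall x, lam x != 0).
Hypothesis lamtheta : forall n, N n -> \tr (Th n) * lam n = \tr (Th n).
Hypotheses (KM : forall x y, K x -> K y -> K (x * y)%g) (NK : forall n, N n -> K n).
Hypotheses (Piu : forall x, K x -> Pi x \in unitmx)
  (PiM : forall x y, K x -> K y -> Pi x *m Pi y = alpha x y *: Pi (x * y)%g)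
  (PiN : forall x n, K x -> N n -> Pi (x * n)%g = Pi x *m Th n).
Hypotheses (f0 : forall x, K x -> f x != 0) (fN : forall x n, K x -> N n -> f (x * n)%g = f x).
Hypotheses (thetahE : forall x, K x -> thetah x = \tr (Pi x))
  (key : forall x, K x -> thetah x * lam x = thetah x * f x).

Lemma ND X : (forall n, N n -> \tr (X *m Th n) = 0) -> X = 0.
Proof.
move=> H.
have H' : forall M, \tr (X *m M) = 0.
  move=> M; have [s [os ->]] := SpAll M; rewrite /ev mulmx_sumr tr_sum big1_seq //.
  by move=> p /andP [_ /os Pp]; rewrite -scalemxAr mxtraceZ H // mulr0.
by apply/matrixP => i j; rewrite -tr_delta H' mxE.
Qed.

Definition tw (s : seq (F * G)) := \sum_(p <- s) (p.1 * lam p.2) *: Th p.2.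

Lemma trtw s k : okS N s -> N k -> \tr (tw s *m Th k) = (lam k)^-1 * \tr (ev Th s *m Th k).
Proof.
move=> os Nk; rewrite /tw /ev !mulmx_suml !tr_sum mulr_sumr.
apply: eq_big_seq => p /os Pp; rewrite -!scalemxAl !mxtraceZ -ThM //.
rewrite -[in RHS](lamtheta (NM Pp Nk)) lamM.
by field; rewrite lam0.
Qed.

Lemma pointwise x k : K x -> N k ->
  \tr (Pi x *m Th k) * (lam k)^-1 = lam x / f x * \tr (Pi x *m Th k).
Proof.
move=> Kx Nk; have Kxk := KM Kx (NK Nk).
have := key Kxk; rewrite thetahE // PiN // fN // lamM.
have [->|nt] := eqVneq (\tr (Pi x *m Th k)) 0; first by rewrite !(mulr0, mul0r).
rewrite -mulrA => /(mulfI nt) e; rewrite -e; field.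
by have := f0 Kx; rewrite -e mulf_eq0 negb_or => /andP [-> ->].
Qed.

Lemma Lprime s x c : okS N s -> K x -> ev Th s = c *: Pi x ->
  tw s = (c * (lam x / f x)) *: Pi x.
Proof.
move=> os Kx es; apply/eqP; rewrite -subr_eq0; apply/eqP; apply: ND => k Nk.
rewrite mulmxBl raddfB /= trtw // es -scalemxAl -scalemxAl !mxtraceZ.
by rewrite mulrCA (mulrC (lam k)^-1) pointwise // !mulrA subrr.
Qed.

Lemma tw_prod s t : okS N s -> okS N t -> tw (prodS s t) = tw s *m tw t.
Proof.
move=> os ot; rewrite /tw /prodS big_allpairs_dep mulmx_suml; apply: eq_big_seq => p /os Pp.
rewrite mulmx_sumr; apply: eq_big_seq => q /ot Pq /=.
rewrite ThM // -scalemxAl -scalemxAr scalerA lamM; congr (_ *: _); ring.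
Qed.

Lemma gmul x y : K x -> K y -> lam (x * y)%g / f (x * y)%g = (lam x / f x) * (lam y / f y).
Proof.
move=> Kx Ky.
have [s [os es]] := SpAll (Pi x); have [t [ot et]] := SpAll (Pi y).
have e1 := Lprime os Kx (etrans (esym es) (esym (scale1r _))).
have e2 := Lprime ot Ky (etrans (esym et) (esym (scale1r _))).
have e3 : ev Th (prodS s t) = alpha x y *: Pi (x * y)%g by rewrite (ev_prod ThM os ot) -es -et PiM.
have e4 := Lprime (ok_prod NM os ot) (KM Kx Ky) e3.
rewrite tw_prod // e1 e2 -scalemxAl -scalemxAr scalerA PiM // scalerA in e4.
have nz : Pi (x * y)%g != 0 by apply: unit_nz => //; apply: Piu; apply: KM.
have na : alpha x y != 0.
  apply/eqP => e; have := @unit_nz _ _ (Pi x *m Pi y) mpos; rewrite unitmx_mul !Piu // => /(_ isT).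
  by rewrite PiM // e scale0r eqxx.
move/eqP: e4; rewrite -subr_eq0 -scalerBl scaler_eq0 (negbTE nz) orbF subr_eq0 => /eqP.
rewrite !mul1r [X in _ = X]mulrC => e; apply: (mulIf na); rewrite -e; ring.
Qed.
End Main.

Section PhiDef.
Variables (F : fieldType) (m : nat) (D : 'I_m -> 'I_m -> 'M[F]_m).
Definition PhiD (A : 'M[F]_m) := \sum_i \sum_j A i j *: D i j.
Definition hD (u : 'rV[F]_(m * m)) := mxvec (PhiD (vec_mx u)).
Lemma hD_linear : linear hD.
Proof.
move=> a u v; rewrite /hD [vec_mx _]linearP /=.
suff -> : PhiD (a *: vec_mx u + vec_mx v) = a *: PhiD (vec_mx u) + PhiD (vec_mx v) by rewrite linearP.
rewrite /PhiD scaler_sumr -big_split /=; apply: eq_bigr => i _.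
rewrite scaler_sumr -big_split /=; apply: eq_bigr => j _.
by rewrite !mxE scalerDl scalerA.
Qed.
HB.instance Definition _ := GRing.isLinear.Build F 'rV[F]_(m * m) 'rV[F]_(m * m) _ hD hD_linear.

Lemma PhiD_surj : (forall A, PhiD A = 0 -> A = 0) -> forall M, exists A, M = PhiD A.
Proof.
move=> inj M.
set L := lin1_mx hD.
have fL : row_free L.
  rewrite -kermx_eq0; apply/eqP/row_matrixP => i; rewrite row0.
  have : row i (kermx L) *m L = 0 by rewrite -row_mul mulmx_ker row0.
  rewrite mul_rV_lin1 /hD => /eqP; rewrite mxvec_eq0 => /eqP /inj /eqP.
  by rewrite vec_mx_eq0 => /eqP.
have : (mxvec M <= L)%MS by apply: submx_full; rewrite row_full_unit -row_free_unit.
move=> /submxP [x ex]; exists (vec_mx x); apply: (can_inj (@mxvecK _ _ _)).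
by rewrite ex mul_rV_lin1.
Qed.
End PhiDef.

Lemma tr_expand (F : fieldType) m (X : 'I_m -> 'I_m -> 'M[F]_m) A B :
  \tr (PhiD X A *m PhiD X B) =
  \sum_i \sum_j \sum_k \sum_l (A i j * B k l) * \tr (X i j *m X k l).
Proof.
rewrite /PhiD mulmx_suml tr_sum; apply: eq_bigr => i _.
rewrite mulmx_suml tr_sum; apply: eq_bigr => j _.
rewrite mulmx_sumr tr_sum; apply: eq_bigr => k _.
rewrite mulmx_sumr tr_sum; apply: eq_bigr => l _.
by rewrite -scalemxAl -scalemxAr !mxtraceZ mulrA mulrC (mulrC (A i j)).
Qed.

Lemma tr_ev (F : fieldType) (G : eqType) m (X : G -> 'M[F]_m) s :
  \tr (ev X s) = \sum_(p <- s) p.1 * \tr (X p.2).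
Proof. by rewrite /ev tr_sum; apply: eq_bigr => p _; rewrite mxtraceZ. Qed.

Section Transfer.
Variables (F : fieldType) (G : groupType) (N : G -> Prop) (m : nat) (Th Th2 : G -> 'M[F]_m).
Hypotheses (NM : forall x y, N x -> N y -> N (x * y)%g).
Hypotheses (ThM : forall x y, N x -> N y -> Th (x * y)%g = Th x *m Th y).
Hypotheses (Th2M : forall x y, N x -> N y -> Th2 (x * y)%g = Th2 x *m Th2 y).
Hypothesis trE : forall n, N n -> \tr (Th n) = \tr (Th2 n).
Hypothesis SpTh : forall M, Sp N Th M.

Lemma tr_ident s t : okS N s -> okS N t ->
  \tr (ev Th2 s *m ev Th2 t) = \tr (ev Th s *m ev Th t).
Proof.
move=> os ot; rewrite -(ev_prod Th2M os ot) -(ev_prod ThM os ot) !tr_ev.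
by apply: eq_big_seq => p /(ok_prod NM os ot) Pp; rewrite trE.
Qed.

Theorem transfer M : Sp N Th2 M.
Proof.
have hs : forall i j, {s | okS N s /\ delta_mx i j = ev Th s} :=
  fun i j => constructive_indefinite_description _ (SpTh (delta_mx i j)).
pose D i j := ev Th2 (sval (hs i j)).
have trD : forall A B, \tr (PhiD D A *m PhiD D B) = \tr (A *m B).
  move=> A B.
  have -> : \tr (A *m B) = \tr (PhiD (@delta_mx F m m) A *m PhiD (@delta_mx F m m) B).
    by rewrite /PhiD -!matrix_sum_delta.
  rewrite !tr_expand.
  apply: eq_bigr => i _; apply: eq_bigr => j _; apply: eq_bigr => k _; apply: eq_bigr => l _.
  congr (_ * _); rewrite /D tr_ident; last 2 first.
  - by case: (svalP (hs i j)) => ok _.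
  - by case: (svalP (hs k l)) => ok _.
  by case: (svalP (hs i j)) => _ <-; case: (svalP (hs k l)) => _ <-.
have inj : forall A0, PhiD D A0 = 0 -> A0 = 0.
  move=> A0 e; apply/matrixP => i j; rewrite -tr_delta -trD e mul0mx mxtrace0 mxE //.
have [A0 ->] := PhiD_surj inj M.
apply: Sp_sum => i; apply: Sp_sum => j; apply: SpZ.
by exists (sval (hs i j)); split => //; case: (svalP (hs i j)) => ok _.
Qed.
End Transfer.

Section An.
Variable G : TopGroup.type.

Lemma cont_onP (A : set G) (h : G -> CC) x : A x ->
  cont_on A h -> h t @[t --> within A (nbhs x)] --> h x.
Proof.
move=> Ax hc; apply/cvgrPdist_lt => e e0.
have [U [oU [Ux HU]]] := hc x Ax e e0.
rewrite /within /=; rewrite nbhsE /=; exists U; first by split.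
by move=> y Uy Ay; rewrite distrC; apply: HU.
Qed.

Lemma cont_onP' (A : set G) (h : G -> CC) :
  (forall x, A x -> h t @[t --> within A (nbhs x)] --> h x) -> cont_on A h.
Proof.
move=> H x Ax e e0; move: (H x Ax) => /cvgrPdist_lt /(_ e e0).
rewrite /within /= nbhsE /= => -[B [oB Bx] HB].
exists B; split; [exact: oB | split; [exact: Bx | move=> y By Ay; rewrite distrC; exact: HB]].
Qed.

Lemma cont_onM (A : set G) (a b : G -> CC) : cont_on A a -> cont_on A b ->
  cont_on A (fun z => a z * b z).
Proof.
move=> ca cb; apply: cont_onP' => x Ax.
by apply: cvgM; exact: cont_onP.
Qed.

Lemma cont_on_inv (h : G -> CC) : continuous (fun x : G => (x^-1)%g) ->
  cont_on setT h -> cont_on setT (fun z => h (z^-1)%g).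
Proof.
move=> ci hc x _ e e0; have [U [oU [Ux HU]]] := hc (x^-1)%g I e e0.
exists ((fun z : G => (z^-1)%g) @^-1` U); split.
  by apply: open_comp => // y _; apply: ci.
by split => // y Uy _; apply: HU.
Qed.

Lemma open_lcoset (N : set G) (x : G) :
  continuous (fun p : G * G => (p.1 * p.2)%g) -> open N ->
  open (fun y : G => N (x^-1 * y)%g).
Proof.
move=> cm oN.
have cl : continuous (fun y : G => (x^-1 * y)%g).
  move=> y; apply: (continuous_comp (f := fun y : G => ((x^-1)%g, y))
                     (g := fun p : G * G => (p.1 * p.2)%g)).
    by apply: cvg_pair; [apply: cvg_cst | apply: cvg_id].
  by apply: cm.
by apply: (@open_comp _ _ (fun y : G => (x^-1 * y)%g) N) => // y _; apply: cl.
Qed.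

Lemma cont_on_loc (N K : set G) (h : G -> CC) :
  continuous (fun p : G * G => (p.1 * p.2)%g) -> open N -> N 1%g ->
  (forall x n, K x -> N n -> h (x * n)%g = h x) -> cont_on K h.
Proof.
move=> cm oN N1 hN x Kx e e0; exists (fun y : G => N (x^-1 * y)%g); split.
  exact: open_lcoset.
split; first by rewrite /= mulVg.
by move=> y Ny Ky; rewrite -[y](mulVKg x) hN // subrr normr0.
Qed.
End An.

Section Fin.
Variable G : TopGroup.type.

Lemma cont_on_ext (A : set G) (h1 h2 : G -> CC) :
  (forall x, A x -> h1 x = h2 x) -> cont_on A h1 -> cont_on A h2.
Proof.
move=> e c x Ax eps e0; have [U [oU [Ux HU]]] := c x Ax eps e0.
by exists U; split => //; split => // y Uy Ay; rewrite -!e //; apply: HU.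
Qed.

Lemma Lin_facts (A : set G) (h : G -> CC) : is_subgroup A -> is_Lin A h ->
  [/\ h 1%g = 1, (forall x y, A x -> A y -> h (x * y)%g = h x * h y) & cont_on A h].
Proof.
move=> [A1 [AM _]] [Th [[Th1 ThM] cr aff]].
have hE : forall x, A x -> h x = Th x 0 0 by move=> x Ax; rewrite aff // tr1.
split.
- by rewrite hE //; rewrite Th1 mxE eqxx.
- move=> x y Ax Ay; rewrite (hE _ (AM _ _ Ax Ay)) (hE _ Ax) (hE _ Ay) ThM //.
  by rewrite mxE big_ord1.
- by apply: (@cont_on_ext A (fun x => Th x 0 0) h) => [x Ax|]; [rewrite hE | apply: cr].
Qed.

Lemma mk_Lin (A : set G) (h : G -> CC) : h 1%g = 1 ->
  (forall x y, A x -> A y -> h (x * y)%g = h x * h y) -> cont_on A h -> is_Lin A h.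
Proof.
move=> h1 hM hc; exists (fun x => (h x)%:M); split.
- by split => [|x y Ax Ay]; rewrite ?h1 // hM // scalar_mxM.
- by move=> i j; rewrite !ord1; apply: (@cont_on_ext A h) => // x _; rewrite mxE.
- by move=> x _; rewrite mxtrace_scalar.
Qed.

Lemma Lin_nz (h : G -> CC) : is_Lin setT h -> forall x, h x != 0.
Proof.
move=> lh; have := @Lin_facts setT h _ lh; case.
  by split => //.
move=> h1 hM _ x; apply/eqP => e; have := hM x (x^-1)%g I I.
by rewrite mulgV h1 e mul0r => /eqP; rewrite oner_eq0.
Qed.

Lemma core (N K : set G) (theta thetah psi psi' mu mu' : G -> CC) :
  profinite G -> open_normal N -> is_Irr N theta -> is_subgroup K -> N `<=` K ->
  strong_ext N K theta thetah -> is_Lin setT psi -> is_Lin setT psi' ->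
  (forall n, N n -> theta n * psi n = theta n * psi' n) ->
  in_FK N K mu -> in_FK N K mu' ->
  (forall x, K x -> thetah x * psi x * mu x = thetah x * psi' x * mu' x) ->
  forall nu, Gamma N K thetah nu -> exists nu', Gamma N K thetah nu' /\
     forall x, K x -> mu x * nu x = mu' x * nu' x.
Proof.
move=> [cm [ci _]] [[N1 [NM Ninv]] [oN Nnorm]] [m [Th [[Th1 ThM] crTh [mpos irr] affTh]]]
  sK NK [m2 [Th2 [Pi [alpha [[[Th21 Th2M] aff2] Piu PiM PiN affPi]]]]] lpsi lpsi' hth
  [mu0 muN] [mu'0 mu'N] hk nu [[linnu nuN] [eps [leps heps]]].
have sT : is_subgroup (setT : set G) by split => //; split.
have [psi1 psiM psic] := Lin_facts sT lpsi.
have [psi'1 psi'M psi'c] := Lin_facts sT lpsi'.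
have psi0 := Lin_nz lpsi.
have psi'0 := Lin_nz lpsi'.
have em : m2 = m.
  have e1 : theta 1%g = m%:R by rewrite affTh // Th1 mxtrace1.
  have e2 : theta 1%g = m2%:R by rewrite aff2 // Th21 mxtrace1.
  by apply/eqP; rewrite -(eqr_nat CC) -e2 -e1.
subst m2.
have SpTh : forall M, Sp N Th M.
  apply: burnside => //.
  - by move=> i j Ni Nj; exists (i * j)%g; split; [apply: NM | apply: ThM].
  - by exists 1%g.
have trE : forall n, N n -> \tr (Th n) = \tr (Th2 n) by move=> n Nn; rewrite -affTh // -aff2.
have SpTh2 := transfer NM ThM Th2M trE SpTh.
pose lam z := psi' z / psi z.
pose f z := mu z / mu' z.
have lamM : forall x y, lam (x * y)%g = lam x * lam y.
  move=> x y; rewrite /lam psiM // psi'M // invfM; ring.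
have lam0 : forall x, lam x != 0 by move=> x; rewrite /lam mulf_neq0 ?invr_eq0.
have lamtheta : forall n, N n -> \tr (Th2 n) * lam n = \tr (Th2 n).
  by move=> n Nn; rewrite -aff2 // /lam mulrA -hth // mulfK.
have [K1 [KM _]] := sK.
have f0 : forall x, K x -> f x != 0.
  by move=> x Kx; rewrite /f mulf_neq0 ?invr_eq0 ?mu0 ?mu'0.
have fN : forall x n, K x -> N n -> f (x * n)%g = f x.
  by move=> x n Kx Nn; rewrite /f muN // mu'N.
have key : forall x, K x -> thetah x * lam x = thetah x * f x.
  move=> x Kx; have e := hk x Kx.
  have nz : psi x * mu' x != 0 by rewrite mulf_neq0 ?mu'0.
  apply: (mulIf nz).
  transitivity (thetah x * psi' x * mu' x); first by rewrite /lam; field.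
  by rewrite -e /f; field; rewrite mu'0.
have PiN' : forall x n, K x -> N n -> Pi (x * n)%g = Pi x *m Th2 n.
  by move=> x n Kx Nn; case: (PiN x n Kx Nn).
have gm := gmul mpos NM Th2M SpTh2 lamM lam0 lamtheta KM NK Piu PiM PiN' f0 fN affPi key.
have fM : forall x y, K x -> K y -> f (x * y)%g = f x * f y.
  move=> x y Kx Ky; have := gm x y Kx Ky; rewrite lamM => e.
  have e' : (f (x * y)%g)^-1 = (f x * f y)^-1.
    apply: (mulfI (mulf_neq0 (lam0 x) (lam0 y))); rewrite e; field.
    by rewrite !f0.
  by move/invr_inj: e'.
have f1 : f 1%g = 1.
  have := fM 1%g 1%g K1 K1; rewrite mulg1 => e.
  by apply: (mulfI (f0 _ K1)); rewrite -e mulr1.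
have [nu1 nuM nuc] := Lin_facts sK linnu.
have [eps1 epsM epsc] := Lin_facts sT leps.
have lamc : cont_on setT lam.
  apply: (@cont_on_ext setT (fun z => psi' z * psi (z^-1)%g)).
    move=> z _; rewrite /lam; congr (_ * _).
    apply: (mulfI (psi0 z)); rewrite -psiM // mulgV psi1 divff //.
  by apply: cont_onM => //; apply: cont_on_inv.
exists (fun z => f z * nu z); split.
  split; first split.
  - apply: mk_Lin.
    + by rewrite f1 nu1 mulr1.
    + by move=> x y Kx Ky; rewrite fM // nuM //; ring.
    + by apply: cont_onM => //; apply: (@cont_on_loc G N K f cm oN N1 fN).
  - by move=> n Nn; rewrite -[n]mul1g fN // f1 mul1r nuN // mul1g.
  exists (fun z => eps z * lam z); split.
  - apply: mk_Lin.
    + by rewrite eps1 /lam psi1 psi'1 divr1 mulr1.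
    + by move=> x y _ _; rewrite epsM // lamM; ring.
    + exact: cont_onM.
  - move=> x Kx /=; have h1 := heps x Kx; have h2 := key x Kx.
    transitivity (thetah x * eps x * lam x); first by ring.
    rewrite h1; transitivity (nu x * (thetah x * lam x)); first by ring.
    by rewrite h2; ring.
by move=> x Kx; rewrite /f; field; rewrite mu'0.
Qed.
End Fin.

End Aux.
Import Aux.
Unset Implicit Arguments.

Theorem lemma2p8 (G : TopGroup.type) (N L K : set G)
  (theta thetah psi psi' mu mu' : G -> CC) (g : G) :
  profinite G -> open_normal N ->
  is_Irr N theta ->
  is_subgroup L -> N `<=` L -> L `<=` stab_twist N theta ->
  is_subgroup K -> N `<=` K -> K `<=` stab N theta ->
  (forall l, L l -> forall x, K x <-> K (conjg' x l)) ->
  strong_ext N K theta thetah ->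
  L g ->
  is_Lin setT psi -> is_Lin setT psi' ->
  (forall n, N n -> theta (conjg' n g) = theta n * psi n) ->
  (forall n, N n -> theta n * psi n = theta n * psi' n) ->
  in_FK N K mu -> in_FK N K mu' ->
  (forall x, K x -> thetah (conjg' x g) = thetah x * psi x * mu x) ->
  (forall x, K x -> thetah x * psi x * mu x = thetah x * psi' x * mu' x) ->
  (* mu Gamma = mu' Gamma as cosets in F_K (elements compared on K) *)
  (forall nu, Gamma N K thetah nu -> exists nu', Gamma N K thetah nu' /\
     forall x, K x -> mu x * nu x = mu' x * nu' x) /\
  (forall nu', Gamma N K thetah nu' -> exists nu, Gamma N K thetah nu /\
     forall x, K x -> mu x * nu x = mu' x * nu' x).
Proof.
move=> pG oN iN _ _ _ sK NK _ _ se _ lp lp' _ hth fm fm' _ hk; split.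
  exact: (core pG oN iN sK NK se lp lp' hth fm fm' hk).
move=> nu' gnu'.
have [nu [gnu e]] := core pG oN iN sK NK se lp' lp (fun n Nn => esym (hth n Nn)) fm' fm
  (fun x Kx => esym (hk x Kx)) gnu'.
by exists nu; split => // x Kx; rewrite e.
Qed.
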